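(* For any time warp $f$, $n\in\omega\setminus\{0\}$, and $m\in\omega$: $f^{r}(n)=m\iff f(m)\le n<f(m+1)$; $f^{r}(n)=\omega\iff f(\omega)\le n$; $f^{r}(\omega)=m\iff f(m+1)=\omega$ and $f^{r}(k)=m$ for some $k\in\omega$; $f^{r}(\omega)=\omega\iff f(\omega)<\omega$ or ($f(\omega)=\omega$ and $f(k)<\omega$ for all $k\in\omega$).
   Context: Let $\overline{\omega}=\omega\cup\{\omega\}$ be the natural numbers with a top element $\omega$ adjoined, with its natural total order. A time warp is a monotone map $f\colon\overline{\omega}\to\overline{\omega}$ with $f(0)=0$ and $f(\omega)=\bigvee\{f(n)\mid n\in\omega\}$. The set $W$ of time warps is ordered pointwise and $fg:=f\circ g$; $\mathrm{id}$ is the identity. The left residual $\backslash$ is the binary operation on $W$ with $g\le f\backslash h\iff fg\le h$ for all $f,g,h\in W$. Define $f^{r}:=f\backslash\mathrm{id}$. *)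

(* Defs.v *)
(* omega-bar = nat with a top element adjoined, encoded as
   [option nat]: [Some n] is the natural number n, [None] is omega. *)
From Stdlib Require Import Arith Lia.

Definition obar := option nat.
Notation omega := (@None nat).

Definition leo (x y : obar) : Prop :=
  match x, y with
  | _, None => True
  | None, Some _ => False
  | Some a, Some b => a <= b
  end.

Definition lto (x y : obar) : Prop := leo x y /\ x <> y.

Definition is_join (F : nat -> obar) (s : obar) : Prop :=
  (forall n, leo (F n) s) /\ (forall u, (forall n, leo (F n) u) -> leo s u).

Record timewarp := TimeWarp {
  tw :> obar -> obar;
  tw_mono : forall x y, leo x y -> leo (tw x) (tw y);
  tw_zero : tw (Some 0) = Some 0;
  tw_omega : is_join (fun n => tw (Some n)) (tw omega)
}.

Definition leW (f g : obar -> obar) : Prop := forall x, leo (f x) (g x).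

Lemma id_mono : forall x y : obar, leo x y -> leo x y.
Proof. auto. Qed.

Lemma id_omega : is_join (fun n => Some n) omega.
Proof.
  split.
  - intros n; exact I.
  - intros [k|] H; [|exact I].
    specialize (H (S k)); simpl in H; lia.
Qed.

Definition idW : timewarp := TimeWarp (fun x => x) id_mono eq_refl id_omega.

Definition is_left_residual (res : timewarp -> timewarp -> timewarp) : Prop :=
  forall f g h : timewarp, leW g (res f h) <-> leW (fun x => f (g x)) h.

(* Main.v *)
Require Import Defs.
From Stdlib Require Import Arith Lia Classical.

Lemma leo_refl x : leo x x.
Proof. destruct x; simpl; auto. Qed.

Lemma leo_trans x y z : leo x y -> leo y z -> leo x z.
Proof. destruct x, y, z; simpl; auto; try lia; tauto. Qed.

Lemma leo_antisym x y : leo x y -> leo y x -> x = y.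
Proof. destruct x, y; simpl; intros; try tauto; f_equal; lia. Qed.

Lemma lto_not x y : lto x y <-> ~ leo y x.
Proof.
  unfold lto; destruct x, y; simpl; split; intros H; try tauto.
  - destruct H as [H1 H2]. intro. apply H2. f_equal. lia.
  - split; [lia|]. intro E; inversion E; lia.
  - split; auto; discriminate.
Qed.

Lemma leo0 x : leo (Some 0) x.
Proof. destruct x; simpl; auto; lia. Qed.

Definition gfun (n : nat) (x : obar) : obar -> obar :=
  fun y => match y with Some k => if k <? n then Some 0 else x | None => x end.

Lemma gfun_mono n x : forall a b, leo a b -> leo (gfun n x a) (gfun n x b).
Proof.
  intros [a|] [b|]; simpl; intros H; try tauto.
  - destruct (Nat.ltb_spec a n), (Nat.ltb_spec b n); try apply leo_refl;
      try apply leo0; lia.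
  - destruct (a <? n); [apply leo0|apply leo_refl].
  - apply leo_refl.
Qed.

Lemma gfun_zero n x : 0 < n -> gfun n x (Some 0) = Some 0.
Proof. intros H; simpl. destruct (Nat.ltb_spec 0 n); auto; lia. Qed.

Lemma gfun_omega n x : is_join (fun k => gfun n x (Some k)) (gfun n x omega).
Proof.
  split.
  - intros k; simpl. destruct (k <? n); [apply leo0|apply leo_refl].
  - intros u H. specialize (H n). simpl in H.
    destruct (Nat.ltb_spec n n); [lia|exact H].
Qed.

Definition gW n x (H : 0 < n) : timewarp :=
  TimeWarp (gfun n x) (gfun_mono n x) (gfun_zero n x H) (gfun_omega n x).

Lemma resid_le res (Hres : is_left_residual res) (f : timewarp) x :
  leo (f (res f idW x)) x.
Proof.
  assert (H := proj1 (Hres f (res f idW) idW) (fun y => leo_refl _)).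
  exact (H x).
Qed.

Lemma key res (Hres : is_left_residual res) (f : timewarp) n x :
  0 < n -> (leo x (res f idW (Some n)) <-> leo (f x) (Some n)).
Proof.
  intros hn; split; intros H.
  - eapply leo_trans; [apply tw_mono; exact H|]. apply resid_le; auto.
  - assert (G : leW (gW n x hn) (res f idW)).
    { apply Hres. intros [k|]; simpl.
      + destruct (Nat.ltb_spec k n).
        * rewrite tw_zero. simpl; lia.
        * eapply leo_trans; [exact H|]. simpl; lia.
      + destruct (f x); exact I. }
    specialize (G (Some n)). simpl in G.
    destruct (Nat.ltb_spec n n); [lia|exact G].
Qed.

Lemma lemB res (Hres : is_left_residual res) (f : timewarp) j :
  f (Some j) = omega -> forall k, ~ leo (Some j) (res f idW (Some k)).
Proof.
  intros Hj k Hle.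
  destruct k as [|k].
  - rewrite tw_zero in Hle. simpl in Hle.
    assert (j = 0) by lia. subst. rewrite tw_zero in Hj. discriminate.
  - apply (key res Hres f (S k)) in Hle; [|lia]. rewrite Hj in Hle. exact Hle.
Qed.

Lemma lemB2 res (Hres : is_left_residual res) (f : timewarp) j :
  f (Some (S j)) = omega -> leo (res f idW omega) (Some j).
Proof.
  intros Hj. apply (proj2 (tw_omega (res f idW))).
  intros k. assert (H := lemB res Hres f _ Hj k).
  destruct (res f idW (Some k)) as [a|]; simpl in *; auto. lia.
Qed.

Theorem lemma2p6 (res : timewarp -> timewarp -> timewarp)
  (Hres : is_left_residual res) (f : timewarp) (n m : nat) (hn : 0 < n) :
  let fr := res f idW in
  (fr (Some n) = Some m <->
     leo (f (Some m)) (Some n) /\ lto (Some n) (f (Some (S m)))) /\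
  (fr (Some n) = omega <-> leo (f omega) (Some n)) /\
  (fr omega = Some m <->
     f (Some (S m)) = omega /\ exists k : nat, fr (Some k) = Some m) /\
  (fr omega = omega <->
     lto (f omega) omega \/
     (f omega = omega /\ forall k : nat, lto (f (Some k)) omega)).
Proof.
  intros fr.
  assert (K := fun n x hn => key res Hres f n x hn). fold fr in K.
  assert (Jup := proj1 (tw_omega fr)). simpl in Jup.
  assert (Z : fr (Some 0) = Some 0) by apply tw_zero.
  split; [|split; [|split]].
  - split.
    + intros E. split.
      * apply K; auto. rewrite E. apply leo_refl.
      * apply lto_not. intros H. apply K in H; auto. rewrite E in H. simpl in H; lia.
    + intros [H1 H2]. apply lto_not in H2.
      apply K in H1; auto.
      assert (H3 : ~ leo (Some (S m)) (fr (Some n))) by (intro H; apply H2; apply K; auto).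
      destruct (fr (Some n)) as [a|]; simpl in *; [|tauto].
      f_equal; lia.
  - split.
    + intros E. apply K; auto. rewrite E; exact I.
    + intros H. apply K in H; auto. destruct (fr (Some n)); simpl in H; tauto.
  - split.
    + intros E. split.
      * destruct (f (Some (S m))) as [N|] eqn:EN; auto.
        assert (H : leo (f (Some (S m))) (Some (S N))) by (rewrite EN; simpl; lia).
        apply K in H; [|lia].
        assert (H2 := Jup (S N)). rewrite E in H2.
        assert (H3 := leo_trans _ _ _ H H2). simpl in H3; lia.
      * apply NNPP. intros NE.
        destruct m as [|m].
        { apply NE. exists 0. exact Z. }
        assert (H : leo (fr omega) (Some m)).
        { apply (proj2 (tw_omega fr)). intros k. simpl.
          assert (H1 := Jup k). rewrite E in H1.
          destruct (fr (Some k)) as [a|] eqn:Ea; simpl in *; [|tauto].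
          assert (a <> S m) by (intro; subst; apply NE; exists k; auto). lia. }
        rewrite E in H; simpl in H; lia.
    + intros [H [k Hk]]. apply leo_antisym.
      * apply lemB2; auto.
      * rewrite <- Hk. apply Jup.
  - split.
    + intros E. destruct (f omega) as [N|] eqn:EN.
      * left. split; [exact I|discriminate].
      * right. split; auto. intros k. apply lto_not. intros H.
        destruct (f (Some k)) eqn:Ek; simpl in H; [tauto|].
        destruct k as [|k]. { rewrite tw_zero in Ek; discriminate. }
        assert (H2 := lemB2 res Hres f k Ek). fold fr in H2. rewrite E in H2; exact H2.
    + intros [[_ H]|[_ H]].
      * destruct (f omega) as [N|] eqn:EN; [|tauto].
        assert (H1 : leo (f omega) (Some (S N))) by (rewrite EN; simpl; lia).
        assert (H2 : leo omega (fr (Some (S N)))) by (apply K; [lia|exact H1]).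
        assert (H3 := Jup (S N)).
        destruct (fr (Some (S N))); simpl in H2; [tauto|].
        destruct (fr omega); simpl in H3; tauto.
      * destruct (fr omega) as [M|] eqn:EM; auto.
        specialize (H (S M)). apply lto_not in H.
        destruct (f (Some (S M))) as [N|] eqn:EN; [|simpl in H; tauto].
        assert (H1 : leo (f (Some (S M))) (Some (S N))) by (rewrite EN; simpl; lia).
        apply K in H1; [|lia].
        assert (H3 := Jup (S N)).
        assert (H4 := leo_trans _ _ _ H1 H3). simpl in H4; lia.
Qed.
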